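(* Let $T>0$, let $h:(0,\infty)\to(0,\infty)$ be bounded with $\lim_{u\to0^+}h(u)=\lim_{u\to+\infty}h(u)=0$, and let $A\in C^1([0,T]\times(0,1)^n;\mathbb S(n))$ satisfy $|A_{ij}(s,\mu)|\le(\mu^i+\mu^j)h(\mu^j/\mu^i)$ for all $(i,j)\in\mathbb E$ and $(s,\mu)\in[0,T]\times(0,1)^n$. There exists a constant $K>1$, depending only on $n$, $\omega_{\min}$, $\omega_{\max}$ and $h$, such that the following holds. Let $\epsilon>0$, $\mu\in\mathcal P_\epsilon(\mathbb G)$, $t_0\in(0,T]$, and let $\rho\in C^1([0,t_0];(0,1)^n)$ be a classical solution of $\dot\rho(s)=\nabla_{\mathbb G}\cdot A(s,\rho(s))+\Delta_{\mathbb G}\rho(s)$, $\rho(0)=\mu$. If $\delta\in(0,\epsilon/K)$, $i_0\in\{1,\dots,n\}$, and $t_0$ is the first time such that $\rho_{i_0}(t_0)=\delta$, then $$\min_{s\in[0,t_0]}\rho_i(s)\le K\delta\qquad\text{for all }i\in\{1,\dots,n\}.$$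
   Context: $\mathbb G=(\mathbb V,\mathbb E,\omega)$: finite, connected, simple undirected graph, $\mathbb V=\{1,\dots,n\}$, edges ordered pairs with $(i,j)\in\mathbb E\iff(j,i)\in\mathbb E$, symmetric weights $\omega_{ij}>0$ iff $(i,j)\in\mathbb E$; $\omega_{\min},\omega_{\max}$ the min/max edge weights. $\mathbb S(n)$: skew-symmetric $n\times n$ matrices. $(\nabla_{\mathbb G}\cdot m)^i=\sum_{j\ne i}\sqrt{\omega_{ij}}m^{ji}$; $(\Delta_{\mathbb G}u)^i=\sum_j\omega_{ij}(u^j-u^i)$. $\mathcal P_\epsilon(\mathbb G)$: probability vectors in $\mathbb R^n$ with all entries $>\epsilon$. $\rho_i$ denotes the $i$-th component. *)

(* Defs.v *)
From mathcomp Require Import all_boot all_order all_algebra.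
From mathcomp Require Import all_classical all_reals all_analysis.
Import Order.TTheory GRing.Theory Num.Theory.
Local Open Scope ring_scope.
Local Open Scope classical_set_scope.

Set Implicit Arguments.
Unset Strict Implicit.
Unset Printing Implicit Defensive.

(* Vectors in R^n are row vectors 'rV[R]_n; the i-th component of x is x ord0 i.
   Vertices {1,...,n} are represented by 'I_n = {0,...,n-1}. *)

(* f is C^1 on the (not necessarily open) set D : f is C^1 (all directional
   derivatives exist and are continuous) on some open set U containing D. *)
Definition C1_on (R : realType) (V W : normedModType R) (D : set V) (f : V -> W) : Prop :=
  exists U : set V, open U /\ D `<=` U /\
    forall v : V,
      (forall x, U x -> derivable f x v) /\
      (forall x, U x -> ('D_v f) y @[y --> x] --> ('D_v f) x).

(* weighted graph given by its weight matrix: omega_ij > 0 iff (i,j) is an edge;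
   symmetric, no loops (simple), connected *)
Definition weighted_graph (R : realType) (n : nat) (w : 'I_n -> 'I_n -> R) : Prop :=
  (forall i j, w i j = w j i) /\ (forall i, w i i = 0) /\ (forall i j, 0 <= w i j) /\
  (forall i j, connect [rel a b | 0 < w a b] i j).

Definition is_min_weight (R : realType) (n : nat) (w : 'I_n -> 'I_n -> R) (m : R) : Prop :=
  (forall i j, 0 < w i j -> m <= w i j) /\ (exists i j, 0 < w i j /\ w i j = m).
Definition is_max_weight (R : realType) (n : nat) (w : 'I_n -> 'I_n -> R) (m : R) : Prop :=
  (forall i j, 0 < w i j -> w i j <= m) /\ (exists i j, 0 < w i j /\ w i j = m).

Definition graph_div (R : realType) (n : nat) (w : 'I_n -> 'I_n -> R) (m : 'M[R]_n) : 'rV[R]_n :=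
  \row_i \sum_(j < n | j != i) Num.sqrt (w i j) * m j i.

Definition graph_lap (R : realType) (n : nat) (w : 'I_n -> 'I_n -> R) (u : 'rV[R]_n) : 'rV[R]_n :=
  \row_i \sum_(j < n) w i j * (u ord0 j - u ord0 i).

Definition in_unit_cube (R : realType) (n : nat) (x : 'rV[R]_n) : Prop :=
  forall i, 0 < x ord0 i < 1.

Definition P_eps (R : realType) (n : nat) (eps : R) (mu : 'rV[R]_n) : Prop :=
  (\sum_(i < n) mu ord0 i = 1) /\ (forall i, eps < mu ord0 i).

Definition time_cube (R : realType) (n : nat) (T : R) : set (R * 'rV[R]_n)%type :=
  [set p | 0 <= p.1 <= T /\ in_unit_cube p.2].

Definition h_admissible (R : realType) (h : R -> R) : Prop :=
  (forall u, 0 < u -> 0 < h u) /\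
  (exists M, forall u, 0 < u -> h u <= M) /\
  (h u @[u --> 0^'+] --> 0) /\
  (h u @[u --> +oo] --> 0).

(* Main.v *)
Require Import Defs.
From mathcomp Require Import all_boot all_order all_algebra.
From mathcomp Require Import all_classical all_reals all_analysis.
From mathcomp Require Import ring lra.
From mathcomp Require Import zify.
Import Order.TTheory GRing.Theory Num.Theory.
Local Open Scope ring_scope.
Local Open Scope classical_set_scope.
Import numFieldNormedType.Exports.

Lemma left_min_deriv (R : realType) (n : nat) (rho : R -> 'rV[R]_n) (t a : R) (j : 'I_n) :
  derivable rho t 1 -> a < t ->
  (forall s, a <= s <= t -> rho t ord0 j <= rho s ord0 j) ->
  ('D_1 rho t) ord0 j <= 0.
Proof.
move=> Hd aLt Hmin.
set q := fun h : R => h^-1 *: ((rho \o shift t) (h *: (1:R)) - rho t).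
have Hq : q @ 0^' --> 'D_1 rho t by exact: Hd.
have Hqj : (fun h => q h ord0 j) @ 0^' --> (('D_1 rho t) ord0 j : R).
  exact: (continuous_cvg _ (@coord_continuous R 1 n ord0 j _) Hq).
have Hl := cvg_dnbhs_at_left Hqj.
rewrite -(cvg_lim _ Hl) //.
apply: limr_le; first by apply/cvg_ex; eexists; exact: Hl.
have az : a - t < 0 by rewrite subr_lt0.
near=> h.
have h0 : h < 0 by near: h; exact: nbhs_left_lt.
have ha : a - t < h by near: h; exact: nbhs_left_gt.
rewrite /q !mxE /= /shift.
apply: mulr_le0_ge0; first by rewrite invr_le0 ltW.
rewrite subr_ge0 Hmin // -[h%:A]/(h * 1) mulr1.
apply/andP; split; lra.
Unshelve. all: by end_near.
Qed.

Lemma near0_h (R : realType) (h : R -> R) (eta : R) : 0 < eta ->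
  h u @[u --> 0^'+] --> 0 -> exists2 r, 0 < r & forall u, 0 < u < r -> h u <= eta.
Proof.
move=> e0 Hl.
have := @cvgr0_norm_le _ _ _ _ _ h Hl _ e0.
case=> r /= r0 Hr.
exists r => // u /andP[u0 ur].
apply: le_trans (ler_norm _) _.
apply: (Hr u) => //.
by rewrite /= sub0r normrN gtr0_norm.
Qed.

Lemma term_lb (R : realType) (w wmin wmax sw swmax xk m a hv M eta c : R) :
  0 < wmin -> 0 <= w -> w <= wmax -> (0 < w -> wmin <= w) -> 0 <= sw -> sw <= swmax ->
 (w = 0 -> sw = 0) -> 0 < xk -> 0 < m -> 1 <= c ->
 (0 < w -> `|a| <= (xk + m) * hv) -> 0 <= hv -> hv <= M ->
 (c * m < xk -> hv <= eta) -> 0 <= eta -> 2 * swmax * eta <= wmin / 2 ->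
 (- ((wmax + swmax * (c + 1) * M) * m) <= sw * a + w * (xk - m)) /\
 (c * m < xk -> 0 < w -> wmin / 2 * xk - wmax * m <= sw * a + w * (xk - m)).
Proof.
move=> wmin0 w0 wM wm sw0 swM sw00 xk0 m0 c1 aB hv0 hvM hve eta0 etaw.
have M0 : 0 <= M by apply: le_trans hvM.
have swM0 : 0 <= swmax by apply: le_trans swM.
have B0 : 0 <= swmax * (c + 1) * M.
  by rewrite mulr_ge0 // mulr_ge0 //; lra.
have wM0 : 0 <= wmax by apply: le_trans wM.
have [w00|wpos] := eqVneq w 0.
  rewrite sw00 // w00 !mul0r addr0; split; last by move=> _; rewrite ltxx.
  by rewrite oppr_le0 mulr_ge0 //; lra.
have wp : 0 < w by rewrite lt_def wpos.
have wmw := wm wp.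
have sa : - (sw * ((xk + m) * hv)) <= sw * a.
  have := aB wp; rewrite ler_norml => /andP [h1 _].
  rewrite -mulrN ler_wpM2l //.
have big : c * m < xk -> wmin / 2 * xk - wmax * m <= sw * a + w * (xk - m).
  move=> cx; have he := hve cx.
  have mx : m < xk by nra.
  have e1 : sw * ((xk + m) * hv) <= swmax * (2 * xk) * eta.
    rewrite mulrA; apply: ler_pM; first by nra.
    - by [].
    - apply: ler_pM; lra.
    - by [].
  have e2 : swmax * (2 * xk) * eta <= wmin / 2 * xk.
    have := ler_wpM2r (ltW xk0) etaw; nra.
  have e3 : wmin * xk <= w * xk by nra.
  have e4 : w * m <= wmax * m by nra.
  nra.
split=> //.
have [cx|cx] := ltrP (c * m) xk.
  have := big cx; have := mulr_ge0 B0 (ltW m0); have := mulr_gt0 wmin0 xk0; nra.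
have e1 : sw * ((xk + m) * hv) <= swmax * ((c + 1) * m) * M.
  rewrite mulrA; apply: ler_pM; first by nra.
  - by [].
  - apply: ler_pM; lra.
  - by [].
have e3 : 0 <= w * xk by nra.
have e4 : w * m <= wmax * m by nra.
nra.
by move=> /big.
Qed.

Lemma step_est (R : realType) (n : nat) (w : 'I_n -> 'I_n -> R) (wmin wmax M eta c C : R)
  (h : R -> R) (x : 'rV[R]_n) (Am : 'M[R]_n) (j k0 : 'I_n) :
  0 < wmin -> (forall i j, w i j = w j i) -> (forall i, w i i = 0) ->
  (forall i j, 0 <= w i j) ->
  (forall i j, 0 < w i j -> wmin <= w i j) -> (forall i j, w i j <= wmax) ->
  (forall i, 0 < x ord0 i) ->
  (forall i, 0 < w i j -> `|Am i j| <= (x ord0 i + x ord0 j) * h (x ord0 j / x ord0 i)) ->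
  (forall u, 0 < u -> 0 <= h u /\ h u <= M) ->
  (forall i, c * x ord0 j < x ord0 i -> h (x ord0 j / x ord0 i) <= eta) ->
  0 <= eta -> 2 * Num.sqrt wmax * eta <= wmin / 2 -> 1 <= c -> c <= C ->
  wmax + n%:R * (wmax + Num.sqrt wmax * (c + 1) * M) <= wmin / 2 * C ->
  (graph_div w Am + graph_lap w x) ord0 j <= 0 ->
  0 < w j k0 -> x ord0 k0 <= C * x ord0 j.
Proof.
move=> wmin0 wsym wdiag wge0 wminP wmaxP xpos Abd hMb heta eta0 etaw c1 cC CB D0 wk0.
rewrite leNgt; apply/negP => Hk0.
set m := x ord0 j.
have m0 : 0 < m by exact: xpos.
set B := wmax + Num.sqrt wmax * (c + 1) * M.
set term := fun k : 'I_n => (if k != j then Num.sqrt (w j k) * Am k j else 0)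
   + w j k * (x ord0 k - m).
have De : (graph_div w Am + graph_lap w x) ord0 j = \sum_k term k.
  rewrite !mxE big_mkcond /= -big_split /=.
  by apply: eq_bigr => k _.
have B0 : 0 <= B.
  have wM0 : 0 <= wmax := le_trans (wge0 j j) (wmaxP j j).
  have M0 : 0 <= M by have [] := hMb 1 ltr01; move=> a b; apply: le_trans b.
  by rewrite addr_ge0 // mulr_ge0 // mulr_ge0 ?sqrtr_ge0 //; lra.
have tl : forall k, k != j ->
    (- (B * m) <= term k) /\ (c * m < x ord0 k -> 0 < w j k -> wmin / 2 * x ord0 k - wmax * m <= term k).
  move=> k kj.
  rewrite /term kj.
  have hx : 0 < m / x ord0 k by rewrite divr_gt0 // xpos.
  have [h0 hM] := hMb _ hx.
  rewrite /=.
  have swle : Num.sqrt (w j k) <= Num.sqrt wmax.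
    by rewrite ler_sqrt // (le_trans (wge0 j j)).
  have sw00 : w j k = 0 -> Num.sqrt (w j k) = 0 by move=> ->; rewrite sqrtr0.
  have aB : 0 < w j k -> `|Am k j| <= (x ord0 k + m) * h (m / x ord0 k).
    by move=> wp; apply: Abd; rewrite wsym.
  exact: (@term_lb R (w j k) wmin wmax (Num.sqrt (w j k)) (Num.sqrt wmax) (x ord0 k) m
     (Am k j) (h (m / x ord0 k)) M eta c wmin0 (wge0 j k) (wmaxP j k) (wminP j k) (sqrtr_ge0 _)
     swle sw00 (xpos k) m0 c1 aB h0 hM (heta k) eta0 etaw).
have tall : forall k, - (B * m) <= term k.
  move=> k; have [->|kj] := eqVneq k j; last by case: (tl k kj).
  rewrite /term eqxx /= subrr !mulr0 addr0 oppr_le0.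
  by rewrite mulr_ge0 // ltW.
have k0j : k0 != j by apply/eqP => e; move: wk0; rewrite e wdiag ltxx.
have cx : c * m < x ord0 k0.
  by apply: le_lt_trans Hk0; rewrite ler_wpM2r // ltW.
have [_ t2] := tl k0 k0j.
have T0 := t2 cx wk0.
have Srest : - (n%:R * (B * m)) <= \sum_(k | k != k0) term k.
  apply: le_trans (ler_sum _ (fun k _ => tall k)).
  rewrite sumr_const mulNrn -[(B * m) *+ _]mulr_natl lerN2 ler_wpM2r ?mulr_ge0 ?(ltW m0) //.
  by rewrite ler_nat; apply: leq_trans (max_card _) _; rewrite card_ord.
move: D0; rewrite De (bigD1 k0) //=.
have : wmin / 2 * (C * m) < wmin / 2 * x ord0 k0.
  by rewrite ltr_pM2l //; lra.
have := ler_wpM2r (ltW m0) CB.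
move: CB; rewrite -/B => CB. move=> Dle H1; have H2 := ler_wpM2r (ltW m0) CB.
clearbody B term; nra.
Qed.

Theorem lemma2p1 (R : realType) (n : nat) (h : R -> R) (wmin wmax : R) :
  h_admissible h ->
  exists K : R, 1 < K /\
  forall (w : 'I_n -> 'I_n -> R),
    weighted_graph w -> is_min_weight w wmin -> is_max_weight w wmax ->
  forall (T : R) (A : (R * 'rV[R]_n)%type -> 'M[R]_n),
    0 < T ->
    C1_on (@time_cube R n T) A ->
    (forall p, @time_cube R n T p -> (A p)^T = - A p) ->
    (forall p i j, @time_cube R n T p -> 0 < w i j ->
       `|A p i j| <= (p.2 ord0 i + p.2 ord0 j) * h (p.2 ord0 j / p.2 ord0 i)) ->
  forall (eps : R) (mu : 'rV[R]_n) (t0 : R) (rho : R -> 'rV[R]_n) (delta : R) (i0 : 'I_n),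
    0 < eps -> P_eps eps mu -> 0 < t0 <= T ->
    C1_on `[0, t0] rho ->
    (forall s, 0 <= s <= t0 -> in_unit_cube (rho s)) ->
    (forall s, 0 <= s <= t0 ->
       'D_1 rho s = graph_div w (A (s, rho s)) + graph_lap w (rho s)) ->
    rho 0 = mu ->
    0 < delta < eps / K ->
    rho t0 ord0 i0 = delta ->
    (forall s, 0 <= s < t0 -> rho s ord0 i0 != delta) ->
  forall i : 'I_n, exists2 s : R, 0 <= s <= t0 & rho s ord0 i <= K * delta.
Proof.
rewrite /h_admissible => -[hpos [[Mb hMb] [hlim0 _]]].
have [[wmin0 wmax0]|nP] := pselect (0 < wmin /\ 0 < wmax); last first.
  exists 2; split; first lra.
  move=> w _ [_ [i [j [wij e]]]] [wM _]; exfalso; apply: nP; split.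
    by rewrite -e.
  exact: lt_le_trans wij (wM _ _ wij).
have M0 : 0 <= Mb by apply: le_trans (ltW (hpos 1 ltr01)) (hMb 1 ltr01).
have sw0 : 0 < Num.sqrt wmax by rewrite sqrtr_gt0.
set eta := wmin / (4 * Num.sqrt wmax).
have eta0 : 0 < eta by rewrite /eta divr_gt0 // mulr_gt0.
have etaw : 2 * Num.sqrt wmax * eta <= wmin / 2.
  rewrite /eta le_eqVlt; apply/orP; left; apply/eqP; field.
  by rewrite gt_eqF.
have [r r0 hr] := @near0_h R h eta eta0 hlim0.
set c := 1 + r^-1.
have c1 : 1 <= c by rewrite /c lerDl invr_ge0 ltW.
set B := wmax + Num.sqrt wmax * (c + 1) * Mb.
have B0 : 0 <= B.
  have h1 : 0 <= Num.sqrt wmax * (c + 1) by apply: mulr_ge0; [exact: ltW | lra].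
  have := mulr_ge0 h1 M0; rewrite /B; lra.
set C := c + (wmax + n%:R * B) * 2 / wmin.
have Q0 : 0 <= (wmax + n%:R * B) * 2 / wmin.
  apply: divr_ge0; last exact: ltW.
  apply: mulr_ge0; last lra.
  by apply: addr_ge0; [exact: ltW | apply: mulr_ge0].
have cC : c <= C by rewrite /C lerDl.
have C1 : 1 <= C by apply: le_trans cC.
have CB : wmax + n%:R * B <= wmin / 2 * C.
  have E : wmin / 2 * ((wmax + n%:R * B) * 2 / wmin) = wmax + n%:R * B.
    by field; rewrite gt_eqF.
  have h2 : 0 <= wmin / 2 * c by apply: mulr_ge0; lra.
  rewrite /C; move: Q0 E; move: (wmax + n%:R * B) => Y Q0' E.
  rewrite mulrDr E; lra.
have Cn1 : 1 <= C ^+ n by exact: exprn_ege1.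
exists (2 * C ^+ n); split; first lra.
move=> w [wsym [wdiag [wge0 conn]]] [wminP _] [wmaxP' _] T A T0 _ _ Abd eps mu t0 rho
  delta i0 eps0 [_ mupos] /andP[t00 t0T] [U [Uo [sU Hder]]] cube ode rho0 /andP[d0 dK]
  rt0 _ i.
have wmaxP : forall i j, w i j <= wmax.
  move=> a b; have [wp|] := ltP 0 (w a b); first exact: wmaxP'.
  by move=> wl; apply: le_trans wl (ltW wmax0).
have der : forall s, 0 <= s <= t0 -> derivable rho s 1.
  move=> s hs; apply: (Hder 1).1; apply: sU.
  by rewrite /= in_itv /=.
have cont : forall j, {within `[0, t0], continuous (fun s => rho s ord0 j)}.
  move=> j.
  have hc : {within `[0, t0], continuous rho}.
    apply: derivable_within_continuous => s.
    by rewrite in_itv /= => hs; apply: der.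
  apply: (@within_continuous_comp _ _ _ _ rho (fun M : 'rV[R]_n => M ord0 j)) => //.
  move=> M _; exact: (@coord_continuous R 1 n ord0 j).
have Kd : 2 * C ^+ n * delta < eps.
  by move: dK; rewrite ltr_pdivlMr ?mulr_gt0 //; lra.
have step : forall j L, (exists2 s, 0 <= s <= t0 & rho s ord0 j <= L) -> L < eps ->
    forall k, 0 < w j k -> exists2 s, 0 <= s <= t0 & rho s ord0 k <= C * L.
  move=> j L [s hs hsL] Le k wjk.
  have [tm tmI tmmin] := EVT_min (ltW t00) (cont j).
  move: tmI; rewrite in_itv /= => /andP[tm0' tmt].
  have mle : rho tm ord0 j <= L.
    by apply: le_trans hsL; apply: tmmin; rewrite in_itv.
  have tm0 : 0 < tm.
    rewrite lt_def tm0' andbT; apply/eqP => e.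
    move: mle; rewrite e rho0 => mle.
    have := mupos j; lra.
  have Dle : ('D_1 rho tm) ord0 j <= 0.
    apply: (@left_min_deriv R n rho tm 0 j (der tm _) tm0); first by rewrite tm0'.
    move=> s' /andP[s0 s1]; apply: tmmin; rewrite in_itv /= s0 /=.
    exact: le_trans s1 tmt.
  rewrite ode ?tm0' // in Dle.
  have xpos : forall i, 0 < rho tm ord0 i.
    by move=> a; have /andP[] := cube tm (introT andP (conj tm0' tmt)) a.
  exists tm; first by rewrite tm0'.
  apply: le_trans (_ : C * rho tm ord0 j <= C * L); last first.
    by rewrite ler_wpM2l // (le_trans ler01).
  apply: (@step_est R n w wmin wmax Mb eta c C h (rho tm) (A (tm, rho tm)) j k) => //.
  - move=> a wa; apply: Abd => //; split.
      by rewrite /= tm0' (le_trans tmt).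
    exact: (cube tm (introT andP (conj tm0' tmt))).
  - by move=> u u0; split; [exact: ltW (hpos u u0) | exact: hMb].
  - move=> a ca; apply: hr; rewrite divr_gt0 ?xpos //=.
    rewrite ltr_pdivrMr ?xpos //.
    have m0 := xpos j; have xa := xpos a.
    have e1 : r^-1 * rho tm ord0 j < rho tm ord0 a.
      apply: (le_lt_trans _ ca); apply: ler_wpM2r; first exact: ltW.
      by rewrite /c -subr_ge0 addrK ler01.
    have e2 : r * (r^-1 * rho tm ord0 j) = rho tm ord0 j.
      by rewrite mulrA mulfV ?gt_eqF // mul1r.
    by rewrite -{1}e2 ltr_pM2l.
  - exact: ltW.
have pathP : forall p x a, path [rel a b | 0 < w a b] x p -> (size p + a <= n)%N ->
    (exists2 s, 0 <= s <= t0 & rho s ord0 x <= C ^+ a * delta) ->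
    exists2 s, 0 <= s <= t0 & rho s ord0 (last x p) <= C ^+ (a + size p) * delta.
  elim=> [|y p IH] x a /=; first by rewrite addn0.
  move=> /andP[exy pth] hsz hx.
  have Lt : C ^+ a * delta < eps.
    have : C ^+ a <= C ^+ n.
      by apply: ler_weXn2l => //; apply: leq_trans hsz; apply: leq_addl.
    move=> H; have H1 := ler_wpM2r (ltW d0) H.
    have H2 : 0 < C ^+ n * delta by rewrite mulr_gt0 // (lt_le_trans ltr01).
    move: Kd H1 H2; rewrite -mulrA; move: (C ^+ n * delta) (C ^+ a * delta) => X Y; lra.
  have [s hs hsy] := step x _ hx Lt y exy.
  have := IH y a.+1 pth _ _.
  rewrite addSnnS; apply.
    by move: hsz; rewrite addSnnS.
  by exists s => //; rewrite exprS -mulrA.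
have /connectP [p pth ->] := conn i0 i.
case: (shortenP pth) => p' pth' uq _.
have sz : (size p' + 0 <= n)%N.
  rewrite addn0; move/card_uniqP: uq => /= e.
  by have := max_card (mem (i0 :: p')); rewrite e card_ord /= => /ltnW.
have [|s hs H] := pathP p' i0 0%N pth' sz.
  exists t0; first by rewrite (ltW t00) lexx.
  by rewrite expr0 mul1r rt0.
exists s => //; apply: le_trans H _.
rewrite add0n ler_wpM2r ?ltW //.
have : C ^+ size p' <= C ^+ n by apply: ler_weXn2l => //; move: sz; rewrite addn0.
lra.
Qed.
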